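(* Let $\mathbf{B}$ be a 2-element algebra with universe $\{0,1\}$ such that $\mathrm{Clo}(\mathbf{B})=\mathsf{U}$, and let $\mathbf{A}=\mathbf{B}^n$. Then any algorithm (classical or quantum) solving $\mathrm{HKP}(\mathbf{A})$ must make $\Omega(2^n)$ queries to the oracle.
   Context: $\mathrm{Clo}(\mathbf{B})$ is the clone of term operations of $\mathbf{B}$ (smallest set of operations on $\{0,1\}$ containing the basic operations and projections, closed under composition). $\mathsf{U}$ is the clone generated by $\neg x$ and the constant $0$. $\mathbf{B}^n$ is the direct power with coordinatewise operations. A congruence is an equivalence relation compatible with all operations; $\ker(\phi)=\{(a,b):\phi(a)=\phi(b)\}$. The Hidden Kernel Problem $\mathrm{HKP}(\mathbf{A})$: given a similar algebra $\mathbf{C}$ and a homomorphism $\phi:\mathbf{A}\to\mathbf{C}$ accessible only as an oracle, determine the congruence $\ker(\phi)$. *)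

(* Defs.v *)
From mathcomp Require Import all_boot all_algebra.
From mathcomp Require Import complex.
From mathcomp Require Import Rstruct.
Set Implicit Arguments. Unset Strict Implicit. Unset Printing Implicit Defensive.
Import GRing.Theory Num.Theory.
Local Open Scope ring_scope.

(* A signature is a type of operation symbols I with arities ar : I -> nat;
   an algebra of that signature on carrier X is
   ops : forall i, ('I_(ar i) -> X) -> X. *)

Inductive term (I : Type) (ar : I -> nat) (k : nat) : Type :=
| tvar of 'I_k
| tapp (i : I) of ('I_(ar i) -> term ar k).

Fixpoint teval (I : Type) (ar : I -> nat) (X : Type)
  (ops : forall i, ('I_(ar i) -> X) -> X) (k : nat) (t : term ar k)
  (x : 'I_k -> X) : X :=
  match t with
  | tvar j => x j
  | tapp i ts => ops i (fun l => teval ops (ts l) x)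
  end.

Definition in_clo (I : Type) (ar : I -> nat)
  (ops : forall i, ('I_(ar i) -> bool) -> bool) (k : nat)
  (f : ('I_k -> bool) -> bool) : Prop :=
  exists t : term ar k, forall x, teval ops t x = f x.

(* The clone U generated by negation and the constant 0. *)
Inductive usym := u_neg | u_zero.
Definition u_ar (s : usym) : nat := match s with u_neg => 1 | u_zero => 0 end.
Definition u_ops (s : usym) : ('I_(u_ar s) -> bool) -> bool :=
  match s as s0 return ('I_(u_ar s0) -> bool) -> bool with
  | u_neg => fun x => ~~ x ord0
  | u_zero => fun _ => false
  end.

(* Clo(B) = U  (equality of clones, compared on all positive arities). *)
Definition clo_is_U (I : Type) (ar : I -> nat)
  (ops : forall i, ('I_(ar i) -> bool) -> bool) : Prop :=
  forall (k : nat), (0 < k)%N -> forall f : ('I_k -> bool) -> bool,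
    in_clo ops f <-> in_clo u_ops f.

Definition pow_carrier (n : nat) := {ffun 'I_n -> bool}.

Definition pow_ops (I : Type) (ar : I -> nat)
  (ops : forall i, ('I_(ar i) -> bool) -> bool) (n : nat) :
  forall i, ('I_(ar i) -> pow_carrier n) -> pow_carrier n :=
  fun i args => [ffun j => ops i (fun l => args l j)].

Definition is_hom (I : Type) (ar : I -> nat) (X Y : Type)
  (opsX : forall i, ('I_(ar i) -> X) -> X)
  (opsY : forall i, ('I_(ar i) -> Y) -> Y) (phi : X -> Y) : Prop :=
  forall i (args : 'I_(ar i) -> X), phi (opsX i args) = opsY i (fun l => phi (args l)).

Definition is_ker (n : nat) (Y : Type) (K : {set pow_carrier n * pow_carrier n})
  (phi : pow_carrier n -> Y) : Prop :=
  forall a b, (a, b) \in K <-> phi a = phi b.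

Definition Cx := Rdefinitions.R[i].

(* operators on the Hilbert space with orthonormal basis indexed by T *)
Definition qop (T : finType) := T -> T -> Cx.
Definition qapply (T : finType) (M : qop T) (v : T -> Cx) : T -> Cx :=
  fun t => \sum_s M t s * v s.
Definition unitary (T : finType) (M : qop T) : Prop :=
  forall t t', \sum_s (M s t)^* * M s t' = (t == t')%:R.

(* Basis of the register space: query register (element of A = B^n),
   answer register (m bits, holding an encoding of an element of C),
   workspace with d+1 basis states. *)
Definition qbasis (n m d : nat) : finType :=
  (pow_carrier n * {ffun 'I_m -> bool} * 'I_d.+1)%type.

Definition qinit (n m d : nat) : qbasis n m d :=
  ([ffun => false], [ffun => false], ord0).

(* Standard oracle: |a, y, w> |-> |a, y xor e(a), w>, where e = enc o phi. *)
Definition oracle_shift (n m d : nat) (e : pow_carrier n -> {ffun 'I_m -> bool})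
  (s : qbasis n m d) : qbasis n m d :=
  let: (a, y, w) := s in (a, [ffun j => y j (+) e a j], w).

Definition oracle (n m d : nat) (e : pow_carrier n -> {ffun 'I_m -> bool}) :
  qop (qbasis n m d) :=
  fun t s => (t == oracle_shift e s)%:R.

(* Final state  U_T O U_(T-1) ... O U_1 O U_0 |init>  (T oracle calls). *)
Fixpoint qrun (T : finType) (O : qop T) (U : nat -> qop T) (v0 : T -> Cx)
  (k : nat) : T -> Cx :=
  match k with
  | 0 => qapply (U 0%N) v0
  | k'.+1 => qapply (U k) (qapply O (qrun O U v0 k'))
  end.

Definition delta (T : finType) (t0 : T) : T -> Cx := fun t => (t == t0)%:R.

Definition succ_prob (n m d : nat) (e : pow_carrier n -> {ffun 'I_m -> bool})
  (U : nat -> qop (qbasis n m d))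
  (out : qbasis n m d -> {set pow_carrier n * pow_carrier n})
  (T : nat) (K : {set pow_carrier n * pow_carrier n}) : Cx :=
  \sum_(b | out b == K)
     `|qrun (oracle e) U (delta (qinit n m d)) T b| ^+ 2.

(* HKP(B^n) is solved (bounded error 1/3) by a quantum query algorithm making
   T queries: for every given similar algebra C (with an injective m-bit
   encoding of its elements, used by the oracle), there is a quantum query
   circuit (depending on C) with T oracle calls which, for every homomorphism
   phi : B^n -> C, outputs ker(phi) with probability >= 2/3. *)
Definition solves_HKP_quantum (I : Type) (ar : I -> nat)
  (opsB : forall i, ('I_(ar i) -> bool) -> bool) (n T : nat) : Prop :=
  forall (C : Type) (opsC : forall i, ('I_(ar i) -> C) -> C)
         (m : nat) (enc : C -> {ffun 'I_m -> bool}), injective enc ->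
  exists (d : nat) (U : nat -> qop (qbasis n m d))
         (out : qbasis n m d -> {set pow_carrier n * pow_carrier n}),
    (forall k, (k <= T)%N -> unitary (U k)) /\
    forall phi : pow_carrier n -> C,
      is_hom (@pow_ops I ar opsB n) opsC phi ->
      forall K, is_ker K phi ->
        (2%:R / 3%:R : Cx) <= succ_prob (fun a => enc (phi a)) U out T K.

(* Main.v *)
Require Import Defs.
From mathcomp Require Import all_boot all_order all_algebra.
From mathcomp Require Import complex.
From mathcomp Require Import Rstruct.
From mathcomp Require Import ring.
From mathcomp Require Import zify.
From Stdlib Require Import FunctionalExtensionality.
Set Implicit Arguments. Unset Strict Implicit. Unset Printing Implicit Defensive.
Import Order.TTheory GRing.Theory Num.Theory.

Lemma sum_card (V : finType) (f : nat -> nat) :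
  (\sum_(S : {set V}) f #|S| = \sum_(k < #|V|.+1) 'C(#|V|, k) * f k)%N.
Proof.
transitivity (\sum_(S : {set V}) \sum_(k < #|V|.+1) (#|S| == k) * f k)%N.
  apply: eq_bigr => S _.
  have hS : (#|S| < #|V|.+1)%N by rewrite ltnS max_card.
  rewrite (bigD1 (Ordinal hS)) //= eqxx mul1n big1 ?addn0 // => k hk.
  by move: hk; rewrite -(inj_eq val_inj) /= eq_sym => /negbTE ->.
rewrite (exchange_big_dep xpredT) //=; apply: eq_bigr => k _.
rewrite -big_distrl /= -(card_draws V k); congr (_ * _)%N.
by rewrite -(sum1_card (mem [set A : {set V} | #|A| == k])) [RHS]big_mkcond /=; apply: eq_bigr => S _; rewrite inE; case: (_ == _).
Qed.

Lemma count_sets (V : finType) t :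
  (2 ^ #|V| * #|[set S : {set V} | (#|S| <= t)%N]| <= 2 ^ t * 3 ^ #|V|)%N.
Proof.
rewrite -sum1_card big_mkcond /= big_distrr /=.
apply: (@leq_trans (\sum_(S : {set V}) 2 ^ t * 2 ^ (#|V| - #|S|))%N).
  apply: leq_sum => S _; rewrite inE; case: ifP => h; last by rewrite muln0.
  by rewrite muln1 -expnD leq_exp2l // -leq_subLR leq_sub2l.
rewrite -big_distrr /= leq_mul2l (@sum_card V (fun k => 2 ^ (#|V| - k))%N).
have -> : 3 = (2 + 1)%N by [].
rewrite expnDn; apply/orP; right; apply: leq_sum => k _.
by rewrite exp1n muln1.
Qed.

Lemma final_arith M T : (4 ^ M <= 4 ^ T * 3 ^ M -> M <= 5 * T)%N.
Proof.
move=> h; rewrite leqNgt; apply/negP => hlt.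
have hM : (0 < M)%N by apply: leq_ltn_trans hlt.
have h5 : ((4 ^ M) ^ 5 <= (4 ^ T * 3 ^ M) ^ 5)%N by rewrite leq_exp2r.
have e1 : ((4 ^ M) ^ 5 = 4 ^ M * 256 ^ M)%N.
  have -> : 256%N = (4 ^ 4)%N by []. rewrite -expnM -expnM -expnD; congr (_ ^ _)%N; lia.
have e2 : ((4 ^ T * 3 ^ M) ^ 5 = 4 ^ (5 * T) * 243 ^ M)%N.
  have -> : 243%N = (3 ^ 5)%N by []. rewrite expnMn -!expnM; congr (_ ^ _ * _ ^ _)%N; lia.
have : (4 ^ (5 * T) * 243 ^ M < 4 ^ M * 256 ^ M)%N.
  apply: (@leq_ltn_trans (4 ^ (5 * T) * 256 ^ M)%N).
    by rewrite leq_mul2l leq_exp2r // orbT.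
  by rewrite ltn_pmul2r ?expn_gt0 // ltn_exp2l.
by rewrite -e1 -e2 ltnNge h5.
Qed.

Local Open Scope ring_scope.

Section Poly.
Variables (V Q : finType).
Local Notation X := {ffun V -> bool}.

Definition mono (S : {set V}) (x : X) : Cx := (S \subset [set v | x v])%:R.

Lemma monoU S S' x : mono S x * mono S' x = mono (S :|: S') x.
Proof. by rewrite /mono subUset; case: (S \subset _); case: (S' \subset _); rewrite ?mul1r ?mul0r. Qed.

Lemma mono0 x : mono set0 x = 1.
Proof. by rewrite /mono sub0set. Qed.

Lemma mono1 v x : mono [set v] x = (x v)%:R.
Proof. by rewrite /mono sub1set inE. Qed.

Lemma mono_conj S x : (mono S x)^* = mono S x.
Proof. by rewrite /mono conjC_nat. Qed.

Definition polyk (k : nat) (F : X -> Q -> Cx) : Prop :=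
  exists (J : finType) (Sf : J -> {set V}) (w : J -> Q -> Cx),
    (forall j, #|Sf j| <= k)%N /\ forall x q, F x q = \sum_j mono (Sf j) x * w j q.

Lemma poly_const (v : Q -> Cx) : polyk 0 (fun _ => v).
Proof.
exists ('I_1 : finType), (fun _ => set0), (fun _ => v); split => [j|x q]; first by rewrite cards0.
by rewrite big_ord1 mono0 mul1r.
Qed.

Lemma poly_apply k (M : qop Q) F : polyk k F -> polyk k (fun x => qapply M (F x)).
Proof.
move=> [J [Sf [w [hS hF]]]].
exists J, Sf, (fun j => qapply M (w j)); split => // x q.
rewrite /qapply; under eq_bigr do rewrite hF big_distrr.
rewrite exchange_big; apply: eq_bigr => j _; rewrite big_distrr; apply: eq_bigr => s _.
exact: mulrCA.
Qed.

Lemma poly_oracle k (O : X -> qop Q) (A B : qop Q) (g : Q -> V) F :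
  (forall x t s, O x t s = A t s + mono [set g s] x * B t s) ->
  polyk k F -> polyk k.+1 (fun x => qapply (O x) (F x)).
Proof.
move=> hO [J [Sf [w [hS hF]]]].
exists (J + (J * Q))%type, (fun u => match u with inl j => Sf j | inr (j, s) => g s |: Sf j end),
  (fun u => match u with inl j => qapply A (w j) | inr (j, s) => fun t => B t s * w j s end).
split => [[j|[j s]]|x q]; first by apply: leq_trans (hS j) _.
  by rewrite cardsU1 -add1n leq_add ?leq_b1 ?hS.
rewrite big_sumType /=.
set S2 := (X in _ + X).
have -> : S2 = \sum_j \sum_s mono (g s |: Sf j) x * (B q s * w j s).
  by rewrite /S2 pair_big; apply: eq_bigr => -[j s].
rewrite /qapply.
transitivity (\sum_s ((A q s * \sum_j mono (Sf j) x * w j s) +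
   (mono [set g s] x * B q s) * \sum_j mono (Sf j) x * w j s)).
  by apply: eq_bigr => s _; rewrite hO hF mulrDl.
rewrite big_split /=; congr (_ + _).
  under eq_bigr do rewrite big_distrr.
  rewrite exchange_big; apply: eq_bigr => j _; rewrite big_distrr; apply: eq_bigr => s _.
  by rewrite /= mulrCA.
under eq_bigr do rewrite big_distrr.
rewrite exchange_big; apply: eq_bigr => j _; apply: eq_bigr => s _ /=.
by rewrite -monoU -!mulrA; congr (_ * _); rewrite mulrCA.
Qed.
Lemma poly_qrun (O : X -> qop Q) (A B : qop Q) (g : Q -> V) (U : nat -> qop Q) v0 k :
  (forall x t s, O x t s = A t s + mono [set g s] x * B t s) ->
  polyk k (fun x => qrun (O x) U v0 k).
Proof.
move=> hO; elim: k => [|k IH] /=.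
  exact: (poly_apply (U 0%N) (poly_const v0)).
exact: (poly_apply (U k.+1) (poly_oracle hO IH)).
Qed.

End Poly.
Section Norm.
Variable Q : finType.
Definition nrm2 (v : Q -> Cx) := \sum_t `|v t| ^+ 2.

Lemma unitary_nrm (M : qop Q) v : unitary M -> nrm2 (qapply M v) = nrm2 v.
Proof.
move=> hM; rewrite /nrm2 /qapply.
under eq_bigr do rewrite normCK rmorph_sum big_distrl /=.
under eq_bigr do under eq_bigr do rewrite big_distrr /=.
rewrite exchange_big /=.
under eq_bigr do rewrite exchange_big /=.
apply: eq_bigr => s _.
transitivity (\sum_s' (v s * (v s')^*) * \sum_t (M t s')^* * M t s).
  apply: eq_bigr => s' _; rewrite big_distrr; apply: eq_bigr => t _ /=.
  rewrite (rmorphM Num.conj_op) /=; ring.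
under eq_bigr do rewrite hM.
rewrite (bigD1 s) //= eqxx mulr1 normCK big1 ?addr0 // => s' /negbTE.
by rewrite eq_sym => ->; rewrite mulr0.
Qed.

Lemma perm_unitary (f : Q -> Q) : injective f -> unitary (fun t s => (t == f s)%:R).
Proof.
move=> hf t t'; rewrite (bigD1 (f t)) //= eqxx conjC_nat mul1r big1 ?addr0.
  by rewrite (inj_eq hf) eq_sym.
by move=> s /negbTE ->; rewrite conjC_nat mul0r.
Qed.

Lemma qrun_nrm (O : qop Q) (U : nat -> qop Q) v0 k :
  unitary O -> (forall j, (j <= k)%N -> unitary (U j)) ->
  nrm2 (qrun O U v0 k) = nrm2 v0.
Proof.
move=> hO; elim: k => [|k IH] hU /=; first by rewrite unitary_nrm //; apply: hU.
rewrite unitary_nrm; last by apply: hU.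
rewrite unitary_nrm // IH // => j hj; apply: hU; exact: leqW.
Qed.
End Norm.
Lemma diag_dom_ker N (P : 'M[Cx]_N) (v : 'rV[Cx]_N) :
  (forall i j, 0 <= P i j) -> (forall i, \sum_j P i j <= 1) ->
  (forall i, 2%:R / 3%:R <= P i i) -> v *m P = 0 -> v = 0.
Proof.
move=> hP hrow hdiag hv.
have hj j : `|v 0 j| * P j j <= \sum_(i | i != j) `|v 0 i| * P i j.
  have := congr1 (fun M : 'rV[Cx]_N => M 0 j) hv; rewrite !mxE (bigD1 j) //= => /eqP.
  rewrite addr_eq0 => /eqP h.
  rewrite -(ger0_norm (hP j j)) -normrM h normrN (le_trans (ler_norm_sum _ _ _)) //.
  by apply: ler_sum => i _; rewrite normrM (ger0_norm (hP _ _)).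
have hsum : \sum_j `|v 0 j| * P j j <= \sum_i `|v 0 i| * (1 - P i i).
  apply: le_trans (ler_sum _ (fun j _ => hj j)) _.
  rewrite (exchange_big_dep predT) //=.
  apply: ler_sum => i _.
  rewrite -big_distrr /= ler_wpM2l //.
  have := hrow i; rewrite (bigD1 i) //= => h.
  rewrite lerBrDl; under eq_bigl do rewrite eq_sym. by [].
have hpos i : 0 < P i i *+ 2 - 1.
  rewrite subr_gt0; apply: lt_le_trans (ler_wMn2r 2 (hdiag i)).
  rewrite -mulrnAl -mulr_natr -natrM /= ltr_pdivlMr ?ltr0n // mul1r ltr_nat //.
have ht i : 0 <= `|v 0 i| * (P i i *+ 2 - 1) by rewrite mulr_ge0 // ltW.
have hs : \sum_i `|v 0 i| * (P i i *+ 2 - 1) = 0.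
  apply/le_anti/andP; split; last exact: sumr_ge0.
  have -> : \sum_i `|v 0 i| * (P i i *+ 2 - 1) =
    \sum_j `|v 0 j| * P j j - \sum_i `|v 0 i| * (1 - P i i).
    rewrite -sumrB; apply: eq_bigr => k _; rewrite mulr2n; ring.
  by rewrite subr_le0.
apply/rowP => k; rewrite mxE.
have /eqP := (psumr_eq0P (fun i _ => ht i) hs) k isT.
rewrite mulf_eq0 (gt_eqF (hpos k)) orbF normr_eq0 => /eqP ->.
by [].
Qed.
Lemma sqr_sum (J Q : finType) (V : finType) (Sf : J -> {set V}) (w : J -> Q -> Cx) x q :
  `|\sum_j mono (Sf j) x * w j q| ^+ 2 =
  \sum_j \sum_j' mono (Sf j :|: Sf j') x * (w j q * (w j' q)^*).
Proof.
rewrite normCK rmorph_sum big_distrl /=; apply: eq_bigr => j _.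
rewrite big_distrr /=; apply: eq_bigr => j' _.
rewrite (rmorphM Num.conj_op) /= mono_conj -monoU; ring.
Qed.

Lemma row_sum_le (I Q : finType) (Kt : eqType) (out : Q -> Kt) (Kf : I -> Kt)
  (f : Q -> Cx) : injective Kf -> (forall q, 0 <= f q) ->
  \sum_x' \sum_(q | out q == Kf x') f q <= \sum_q f q.
Proof.
move=> hK hf; rewrite (exchange_big_dep predT) //=; apply: ler_sum => q _.
case: (pickP (fun x' => out q == Kf x')) => [x0 hx0|none].
  rewrite (big_pred1 x0) // => x' /=; move/eqP: hx0 => ->.
  by rewrite (inj_eq hK) eq_sym.
by rewrite big_pred0 // => x'; rewrite none.
Qed.

Lemma rank_bound (V Q : finType) (Kt : eqType) t (F : {ffun V -> bool} -> Q -> Cx)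
  (out : Q -> Kt) (Kf : {ffun V -> bool} -> Kt) :
  polyk t F -> injective Kf -> (forall x, nrm2 (F x) = 1) ->
  (forall x, 2%:R / 3%:R <= \sum_(q | out q == Kf x) `|F x q| ^+ 2) ->
  (#|{ffun V -> bool}| <= #|[set S : {set V} | (#|S| <= t.*2)%N]|)%N.
Proof.
move=> [J [Sf [w [hS hF]]]] hK hN hsucc.
set SS := [set S : {set V} | (#|S| <= t.*2)%N].
pose Bm : 'M[Cx]_(#|{ffun V -> bool}|, #|SS|) := \matrix_(i, s) mono (enum_val s) (enum_val i).
pose Am : 'M[Cx]_(#|SS|, #|{ffun V -> bool}|) := \matrix_(s, i') \sum_(q | out q == Kf (enum_val i'))
   \sum_j \sum_j' ((Sf j :|: Sf j' == enum_val s)%:R * (w j q * (w j' q)^*)).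
have hP i i' : (Bm *m Am) i i' =
    \sum_(q | out q == Kf (enum_val i')) `|F (enum_val i) q| ^+ 2.
  rewrite !mxE.
  transitivity (\sum_(S in SS) mono S (enum_val i) * \sum_(q | out q == Kf (enum_val i'))
   \sum_j \sum_j' ((Sf j :|: Sf j' == S)%:R * (w j q * (w j' q)^*))).
    by rewrite [RHS]big_enum_val; apply: eq_bigr => s _; rewrite /Bm /Am !mxE.
  under eq_bigr do rewrite big_distrr /=.
  rewrite exchange_big /=; apply: eq_bigr => q _.
  rewrite hF sqr_sum.
  under eq_bigr do rewrite big_distrr /=.
  rewrite exchange_big /=; apply: eq_bigr => j _.
  under eq_bigr do rewrite big_distrr /=.
  rewrite exchange_big /=; apply: eq_bigr => j' _.
  have hU : Sf j :|: Sf j' \in SS.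
    rewrite inE (leq_trans (leq_card_setU _ _)) // -addnn leq_add //.
  rewrite (bigD1 (Sf j :|: Sf j')) //= eqxx mul1r big1 ?addr0 // => S /andP[_ hSn].
  by rewrite eq_sym (negbTE hSn) mul0r mulr0.
have hfree : row_free (Bm *m Am).
  rewrite -kermx_eq0; apply/eqP/row_matrixP => k; rewrite row0.
  apply: (@diag_dom_ker _ (Bm *m Am)).
  - by move=> i i'; rewrite hP; apply: sumr_ge0 => q _; exact: exprn_ge0.
  - move=> i; under eq_bigr do rewrite hP.
    rewrite -(hN (enum_val i)) /nrm2.
    apply: (@row_sum_le _ _ _ out (fun j => Kf (enum_val j))) => [j1 j2 /hK|q].
      exact: enum_val_inj.
    exact: exprn_ge0.
  - by move=> i; rewrite hP; apply: hsucc.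
  - by rewrite -row_mul mulmx_ker row0.
have := mxrankM_maxl Bm Am; rewrite (eqP hfree) => h.
exact: leq_trans h (rank_leq_col _).
Qed.
Definition op_kind k (f : ('I_k -> bool) -> bool) : Prop :=
  (exists j, forall y, f y = y j) \/ (exists j, forall y, f y = ~~ y j) \/
  (exists c : bool, forall y, f y = c).

Lemma uterm_class k (t : term u_ar k) : op_kind (teval u_ops t).
Proof.
elim: t => [j|[] ts IH] /=; first by left; exists j.
  case: (IH ord0) => [[j hj]|[[j hj]|[c hc]]].
  - by right; left; exists j => y; rewrite hj.
  - by left; exists j => y; rewrite hj negbK.
  - by right; right; exists (~~ c) => y; rewrite hc.
by right; right; exists false.
Qed.

Lemma op_class (I : Type) (ar : I -> nat) (opsB : forall i, ('I_(ar i) -> bool) -> bool) :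
  clo_is_U opsB -> forall i, op_kind (opsB i).
Proof.
move=> hB i; case: (posnP (ar i)) => hi.
  right; right; exists (opsB i (fun _ => false)) => y; congr (opsB i _).
  apply: functional_extensionality => l; case: l => l hl; exfalso.
  by move: hl; rewrite hi.
have [t ht] : in_clo u_ops (opsB i).
  apply/(hB _ hi); exists (tapp (tvar ar (k:=ar i)) (i:=i)) => x /=; by [].
case: (uterm_class t) => [[j hj]|[[j hj]|[c hc]]].
- by left; exists j => y; rewrite -ht hj.
- by right; left; exists j => y; rewrite -ht hj.
- by right; right; exists c => y; rewrite -ht hc.
Qed.

Section Phi.
Variable p : nat.
Local Notation A := (pow_carrier p.+2).
Local Notation V := {ffun 'I_p -> bool}.

Definition o1 : 'I_p.+2 := lift ord0 ord0.
Definition keyf (a : A) : V := [ffun j => a (lift ord0 (lift ord0 j)) (+) a ord0].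
Definition mrg (a : A) : A := [ffun j => if j == o1 then a ord0 else a j].
Definition phix (x : {ffun V -> bool}) (a : A) : A := if x (keyf a) then mrg a else a.
Definition negv (a : A) : A := [ffun j => ~~ a j].
Definition constv (c : bool) : A := [ffun _ => c].

Lemma keyf_neg a : keyf (negv a) = keyf a.
Proof. by apply/ffunP => j; rewrite !ffunE addbN addNb negbK. Qed.

Lemma mrg_neg a : mrg (negv a) = negv (mrg a).
Proof. by apply/ffunP => j; rewrite !ffunE; case: ifP. Qed.

Lemma phix_neg x a : phix x (negv a) = negv (phix x a).
Proof. by rewrite /phix keyf_neg mrg_neg; case: ifP. Qed.

Lemma phix_const x c : phix x (constv c) = constv c.
Proof.
rewrite /phix; case: ifP => // _; apply/ffunP => j; rewrite !ffunE; by case: ifP.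
Qed.

Lemma phix_hom (I : Type) (ar : I -> nat) (opsB : forall i, ('I_(ar i) -> bool) -> bool) x :
  clo_is_U opsB -> is_hom (@pow_ops _ _ opsB p.+2) (@pow_ops _ _ opsB p.+2) (phix x).
Proof.
move=> hB i args; case: (op_class hB i) => [[j hj]|[[j hj]|[c hc]]].
- have e (b : 'I_(ar i) -> A) : @pow_ops _ _ opsB p.+2 i b = b j.
    by apply/ffunP => t; rewrite /pow_ops ffunE hj.
  by rewrite !e.
- have e (b : 'I_(ar i) -> A) : @pow_ops _ _ opsB p.+2 i b = negv (b j).
    by apply/ffunP => t; rewrite /pow_ops !ffunE hj.
  by rewrite !e phix_neg.
- have e (b : 'I_(ar i) -> A) : @pow_ops _ _ opsB p.+2 i b = constv c.
    by apply/ffunP => t; rewrite /pow_ops !ffunE hc.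
  by rewrite !e phix_const.
Qed.

Definition Kf (x : {ffun V -> bool}) : {set A * A} :=
  [set ab | phix x ab.1 == phix x ab.2].

Definition av (v : V) : A := [ffun j => match unlift ord0 j with
  | Some j1 => match unlift ord0 j1 with Some j2 => v j2 | None => false end
  | None => false end].
Definition bv (v : V) : A := [ffun j => if j == o1 then true else av v j].

Lemma av0 v : av v ord0 = false.
Proof. by rewrite ffunE unlift_none. Qed.
Lemma av1 v : av v o1 = false.
Proof. by rewrite ffunE /o1 liftK unlift_none. Qed.
Lemma keyf_av v : keyf (av v) = v.
Proof. by apply/ffunP => j; rewrite ffunE av0 addbF ffunE !liftK. Qed.
Lemma keyf_bv v : keyf (bv v) = v.
Proof.
apply/ffunP => j; rewrite ffunE !(ffunE (fun j => if j == o1 then true else av v j)).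
rewrite (_ : ord0 == o1 = false); last by apply/negbTE; exact: neq_lift.
rewrite (_ : lift ord0 (lift ord0 j) == o1 = false); last first.
  by rewrite /o1 (inj_eq (@lift_inj _ ord0)); apply/negbTE; rewrite eq_sym neq_lift.
by rewrite av0 addbF ffunE !liftK.
Qed.

Lemma Kf_av x v : ((av v, bv v) \in Kf x) = x v.
Proof.
rewrite inE /= /phix keyf_av keyf_bv; case: (x v).
  apply/eqP/ffunP => j; rewrite !ffunE; case: ifP => hj //.
apply/negbTE/eqP => /ffunP /(_ o1); rewrite av1 ffunE eqxx.
by [].
Qed.

Lemma Kf_inj : injective Kf.
Proof.
move=> x x' e; apply/ffunP => v; by rewrite -!Kf_av e.
Qed.
End Phi.
Section Orc.
Variables p d : nat.
Local Notation Qb := (qbasis p.+2 p.+2 d).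

Definition sh (b : bool) (s : Qb) : Qb :=
  let: (a, y, w) := s in (a, [ffun j => y j (+) (if b then mrg a else a) j], w).
Definition oA : qop Qb := fun t s => (t == sh false s)%:R.
Definition oB : qop Qb := fun t s => (t == sh true s)%:R - (t == sh false s)%:R.
Definition og (s : Qb) : {ffun 'I_p -> bool} := keyf s.1.1.

Lemma oracle_dec (x : {ffun {ffun 'I_p -> bool} -> bool}) t s :
  oracle (d:=d) (fun a => phix x a) t s = oA t s + mono [set og s] x * oB t s.
Proof.
rewrite /oracle mono1 /oA /oB /og; case: s => [[a y] w] /=; rewrite /phix.
by case: (x (keyf a)) => /=; rewrite ?mul1r ?mul0r ?addr0 // addrC subrK.
Qed.

Lemma oracle_unitary (e : pow_carrier p.+2 -> {ffun 'I_p.+2 -> bool}) :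
  unitary (oracle (d:=d) e).
Proof.
apply: perm_unitary; apply: (can_inj (g := oracle_shift e)) => -[[a y] w] /=.
by congr (_, _, _); apply/ffunP => j; rewrite !ffunE addbK.
Qed.
End Orc.

Lemma nrm_delta (Q : finType) (t0 : Q) : nrm2 (delta t0) = 1.
Proof.
rewrite /nrm2 (bigD1 t0) //= /delta eqxx normr1 expr1n big1 ?addr0 // => t /negbTE ->.
by rewrite normr0 expr0n.
Qed.

Theorem lemma5p7 (I : Type) (ar : I -> nat)
  (opsB : forall i, ('I_(ar i) -> bool) -> bool)
  (hB : clo_is_U opsB) :
  exists c : Rdefinitions.R, 0 < c /\
  exists N : nat, forall n : nat, (N <= n)%N ->
    forall T : nat, solves_HKP_quantum opsB n T ->
      c * 2%:R ^+ n <= T%:R.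
Proof.
exists (20%:R^-1); split; first by rewrite invr_gt0 ltr0n.
exists 2%N => n hn T hsol.
case: n hn hsol => [|[|p]] // hn hsol.
have key : (2 ^ p <= 5 * T)%N.
  have [d [U [out [hU hs]]]] := hsol (pow_carrier p.+2) (@pow_ops _ _ opsB p.+2) p.+2
     (fun a => a) (fun a b h => h).
  pose F x := qrun (oracle (d:=d) (fun a => phix x a)) U (delta (qinit p.+2 p.+2 d)) T.
  have hpoly : polyk T F := poly_qrun U (delta (qinit p.+2 p.+2 d)) T (@oracle_dec p d).
  have hN x : nrm2 (F x) = 1.
    rewrite /F qrun_nrm ?nrm_delta //; first exact: oracle_unitary.
  have hsx x : 2%:R / 3%:R <= \sum_(q | out q == Kf x) `|F x q| ^+ 2.
    apply: (hs (fun a => phix x a)); first exact: phix_hom.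
    by move=> a b; rewrite inE /=; split => /eqP.
  have := rank_bound hpoly (@Kf_inj p) hN hsx.
  have := count_sets {ffun 'I_p -> bool} T.*2.
  rewrite !card_ffun !card_bool card_ord => h1 h2.
  apply: final_arith.
  have e : (4 ^ 2 ^ p = 2 ^ 2 ^ p * 2 ^ 2 ^ p)%N by rewrite -expnMn.
  have e2 : (2 ^ T.*2 = 4 ^ T)%N by rewrite -mul2n expnM.
  rewrite e -e2; apply: leq_trans h1; by rewrite leq_mul2l h2 orbT.
rewrite -natrX; apply: (le_trans (y := 20%:R^-1 * (20 * T)%:R)).
  rewrite ler_wpM2l ?invr_ge0 ?ler0n // ler_nat expnS expnS mulnA.
  apply: (@leq_trans (2 * 2 * (5 * T))%N); first by rewrite leq_mul2l key orbT.
  by rewrite !mulnA.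
by rewrite natrM mulrA mulVf ?mul1r // pnatr_eq0.
Qed.
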